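(* Let $k$ be even, $\pi\in\mathcal B_{k/2}$, $\mathcal G$ a countable set, and let $g=(g_1,\dots,g_k)\in\mathcal G^k$ be a $\pi$-adopted sequence (indices of $g$ read cyclically, $g_{k+1}:=g_1$). If $\{m,m+l\}\in\pi$ with $m<m+l\le k$ and $l>1$, then $$g_m=g_{m+l+1}\quad\text{and}\quad g_{m+1}=g_{m+l}.$$
   Context: A pair-partition of $\{1,\dots,k\}$ is a partition all of whose blocks have exactly two elements; it is crossing if there exist $1\le a<b<c<d\le k$ with $\{a,c\},\{b,d\}\in\pi$, and non-crossing otherwise. For even $k$, $\mathcal B_{k/2}$ denotes the set of non-crossing pair-partitions of $\{1,\dots,k\}$. For $k\ge 4$, $\pi\in\mathcal B_{k/2}$ and a block $\{m,m+1\}\in\pi$ with $1\le m\le k-2$, $\pi\setminus^\bullet\{m,m+1\}\in\mathcal B_{k/2-1}$ denotes the pair-partition of $\{1,\dots,k-2\}$ obtained by deleting the block $\{m,m+1\}$ and relabelling every remaining element $a>m$ as $a-2$. $\pi$-adopted sequences. Let $\mathcal G$ be a countable set and $\pi\in\mathcal B_{k/2}$. A sequence $g=(g_1,\dots,g_k)\in\mathcal G^k$ is $\pi$-adopted, defined recursively in $k$, as follows. For $k=2$ (so $\pi=\{\{1,2\}\}$), $g$ is $\pi$-adopted iff $g_1\neq g_2$. For $k\ge 4$, $g$ is $\pi$-adopted iff for every block of $\pi$ of the form $\{m,m+1\}$ with $1\le m\le k-2$: (a) $g_m=g_{m+2}$ and $g_{m+1}\neq g_s$ for all $s\neq m+1$;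 and (b) the sequence $(g_1,\dots,g_m,g_{m+3},\dots,g_k)\in\mathcal G^{k-2}$, obtained by deleting $g_{m+1}$ and $g_{m+2}$, is $\pi\setminus^\bullet\{m,m+1\}$-adopted. *)

(* Defs.v *)
From mathcomp Require Import all_boot.
Set Implicit Arguments. Unset Strict Implicit. Unset Printing Implicit Defensive.

Definition in_block (i : nat) (p : nat * nat) : bool := (p.1 == i) || (p.2 == i).

Definition pair_partition (k : nat) (pi : seq (nat * nat)) : Prop :=
  (forall p, p \in pi -> 1 <= p.1 /\ p.1 < p.2 /\ p.2 <= k) /\
  (forall i, 1 <= i <= k -> count (in_block i) pi = 1).

Definition crossing (pi : seq (nat * nat)) : Prop :=
  exists a b c d, [/\ a < b, b < c, c < d, (a, c) \in pi & (b, d) \in pi].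

Definition noncrossing_pair_partition (k : nat) (pi : seq (nat * nat)) : Prop :=
  pair_partition k pi /\ ~ crossing pi.

Definition relabel (m a : nat) : nat := if m < a then a - 2 else a.

Definition delete_block (pi : seq (nat * nat)) (m : nat) : seq (nat * nat) :=
  [seq (relabel m p.1, relabel m p.2) | p <- pi & p != (m, m.+1)].

(* sequences g = (g_1,...,g_k) are functions nat -> T read at indices 1..k;
   deleting g_{m+1}, g_{m+2}: *)
Definition delete_two {T : Type} (g : nat -> T) (m : nat) : nat -> T :=
  fun i => if i <= m then g i else g (i + 2).

(* adopted n pi g : g (of length k = 2n) is pi-adopted *)
Fixpoint adopted {T : Type} (n : nat) (pi : seq (nat * nat)) (g : nat -> T) : Prop :=
  match n with
  | 0 => False
  | n1.+1 =>
      if n1 is 0 then g 1 <> g 2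
      else
        forall m, (m, m.+1) \in pi -> 1 <= m -> m <= n.*2 - 2 ->
          (g m = g (m + 2) /\
           (forall s, 1 <= s <= n.*2 -> s <> m.+1 -> g m.+1 <> g s)) /\
          adopted n1 (delete_block pi m) (delete_two g m)
  end.

Definition gcyc {T : Type} (k : nat) (g : nat -> T) (i : nat) : T :=
  if i == k.+1 then g 1 else g i.

(* Main.v *)
Require Import Defs.
From mathcomp Require Import all_boot.
From mathcomp Require Import zify.
Set Implicit Arguments. Unset Strict Implicit.

Lemma count1_eq (T : eqType) (P : pred T) s x y :
  count P s = 1 -> x \in s -> y \in s -> P x -> P y -> x = y.
Proof.
move=> c xs ys px py; apply/eqP; apply/negPn/negP => nxy.
have pe := perm_to_rem xs.
have : y \in x :: rem x s by rewrite -(perm_mem pe).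
rewrite inE eq_sym (negbTE nxy) /= => yr.
move: c; rewrite ((permP pe) P) /= px.
have : 0 < count P (rem x s) by rewrite -has_count; apply/hasP; exists y.
lia.
Qed.

Lemma pp_bounds k pi p : pair_partition k pi -> p \in pi -> 1 <= p.1 /\ p.1 < p.2 /\ p.2 <= k.
Proof. by case=> h _; apply: h. Qed.

Lemma pp_uniq k pi p q i : pair_partition k pi -> p \in pi -> q \in pi ->
  in_block i p -> in_block i q -> p = q.
Proof.
move=> pp ps qs ip iq.
have [h1 [h2 h3]] := pp_bounds pp ps.
move: h1 h2 h3 ip ps; case: p => a b /= h1 h2 h3 ip ps.
apply: (count1_eq _ ps qs ip iq).
case: pp => _ ->; first done.
move: ip; rewrite /in_block /= => /orP[] /eqP <-; apply/andP; lia.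
Qed.

Lemma pp_exists k pi i : pair_partition k pi -> 1 <= i <= k ->
  exists2 p, p \in pi & in_block i p.
Proof.
case=> _ h /h c; have : has (in_block i) pi by rewrite has_count c.
by case/hasP=> p; exists p.
Qed.

Lemma inner_pair k pi : noncrossing_pair_partition k pi ->
  forall w a b, b - a <= w -> (a, b) \in pi -> a.+1 < b ->
  exists j, [/\ (j, j.+1) \in pi, a < j & j.+1 < b].
Proof.
case=> pp nc; elim=> [|w IH] a b hw ab hab; first lia.
have [h1 [h2 h3]] := pp_bounds pp ab; rewrite /= in h1 h2 h3.
have [[c d] qs iq] := pp_exists (i := a.+1) pp ltac:(apply/andP; lia).
have [q1 [q2 q3]] := pp_bounds pp qs; rewrite /= in q1 q2 q3.
move: iq; rewrite /in_block /= => /orP[] /eqP ec; subst.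
- have db : d < b.
    case: (ltngtP d b) => // hdb.
    + exfalso; apply: nc; exists a, a.+1, b, d; split => //.
    + subst; have := pp_uniq pp ab qs (i := b); rewrite /in_block /= !eqxx !orbT.
      by move=> /(_ isT isT) [] /eqP; lia.
  case: (ltngtP d a.+2) => hd; first lia.
  + have [j [j1 j2 j3]] := IH a.+1 d ltac:(lia) qs ltac:(lia).
    exists j; split => //; lia.
  + by subst; exists a.+1; split => //; lia.
- case: (ltngtP c a) => hc.
  + exfalso; apply: nc; exists c, a, a.+1, b; split => //.
  + lia.
  + subst; have := pp_uniq pp ab qs (i := a); rewrite /in_block /= !eqxx /=.
    by move=> /(_ isT isT) [] /eqP; lia.
Qed.

Lemma prefix_pair k pi m : noncrossing_pair_partition k pi -> (m, k) \in pi -> 1 < m ->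
  exists j, [/\ (j, j.+1) \in pi, 1 <= j & j.+1 < m].
Proof.
move=> ncp mk hm; have [pp nc] := ncp.
have [h1 [h2 h3]] := pp_bounds pp mk; rewrite /= in h1 h2 h3.
have [[c d] qs iq] := pp_exists (i := 1) pp ltac:(apply/andP; lia).
have [q1 [q2 q3]] := pp_bounds pp qs; rewrite /= in q1 q2 q3.
move: iq; rewrite /in_block /= => /orP[] /eqP ec; subst; last lia.
have dm : d < m.
  case: (ltngtP d m) => // hdm.
  - case: (ltngtP d k) => hdk.
    + exfalso; apply: nc; exists 1, m, d, k; split => //.
    + lia.
    + rewrite hdk in qs; have := pp_uniq pp mk qs (i := k); rewrite /in_block /= !eqxx !orbT.
      by move=> /(_ isT isT) [] /eqP; lia.
  - rewrite hdm in qs; have := pp_uniq pp mk qs (i := m); rewrite /in_block /= !eqxx /= !orbT.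
    by move=> /(_ isT isT) [] /eqP; lia.
case: (ltngtP d 2) => hd; first lia.
- have [j [j1 j2 j3]] := inner_pair ncp (leqnn (d - 1)) qs ltac:(lia).
  exists j; split => //; lia.
- by subst; exists 1; split => //; lia.
Qed.

Lemma relabel_eq j a i : a != j -> a != j.+1 ->
  (relabel j a == i) = (a == if i < j then i else i + 2).
Proof.
move=> /eqP h1 /eqP h2; rewrite /relabel.
by case: ifP => ?; case: ifP => ?; apply/eqP/eqP; lia.
Qed.

Lemma relabel_lt j a b : a != j -> a != j.+1 -> b != j -> b != j.+1 ->
  (relabel j a < relabel j b) = (a < b).
Proof.
move=> /eqP h1 /eqP h2 /eqP h3 /eqP h4; rewrite /relabel.
by case: ifP => ?; case: ifP => ?; apply/idP/idP; lia.
Qed.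

Lemma avoid k pi j q : pair_partition k pi -> (j, j.+1) \in pi -> q \in pi -> q != (j, j.+1) ->
  [/\ q.1 != j, q.1 != j.+1, q.2 != j & q.2 != j.+1].
Proof.
case: q => a b pp jp qp nq /=.
have H : forall i, in_block i (a, b) -> in_block i (j, j.+1) -> False.
  by move=> i x y; move/eqP: nq; apply; apply: (pp_uniq pp qp jp x y).
split; apply/negP => /eqP e.
- by apply: (H j); rewrite /in_block /= ?e ?eqxx ?orbT.
- by apply: (H j.+1); rewrite /in_block /= ?e ?eqxx ?orbT.
- by apply: (H j); rewrite /in_block /= ?e ?eqxx ?orbT.
- by apply: (H j.+1); rewrite /in_block /= ?e ?eqxx ?orbT.
Qed.

Lemma delete_ncpp n pi j : noncrossing_pair_partition n.+1.*2 pi -> (j, j.+1) \in pi ->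
  noncrossing_pair_partition n.*2 (delete_block pi j).
Proof.
move=> [pp nc] jp.
have [b1 [b2 b3]] := pp_bounds pp jp; rewrite /= in b1 b2 b3.
have mem : forall p, p \in delete_block pi j -> exists2 q, q \in pi &
   [/\ q != (j, j.+1), p = (relabel j q.1, relabel j q.2) &
     [/\ q.1 != j, q.1 != j.+1, q.2 != j & q.2 != j.+1]].
  move=> p /mapP [q]; rewrite mem_filter => /andP [nq qp] ->.
  by exists q => //; split => //; apply: avoid pp jp qp nq.
split; [split|].
- move=> p /mem [[a b] qp [_ -> [/eqP a1 /eqP a2 /eqP a3 /eqP a4]]] /=.
  have [c1 [c2 c3]] := pp_bounds pp qp; rewrite /= in a1 a2 a3 a4 c1 c2 c3.
  rewrite /relabel doubleS in c3 *.
  by case: ifP => ?; case: ifP => ?; lia.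
- move=> i hi.
  rewrite /delete_block count_map count_filter.
  set i' := if i < j then i else i + 2.
  have -> : count (predI (preim (fun p => (relabel j p.1, relabel j p.2)) (in_block i))
               (fun p => p != (j, j.+1))) pi = count (in_block i') pi.
    apply: eq_in_count => q qp /=.
    case: (eqVneq q (j, j.+1)) => [->|nq] /=.
      rewrite andbF /in_block /i' /=; apply/esym/negbTE; apply/negP.
      by case: ifP => ? /orP[] /eqP; lia.
    have [a1 a2 a3 a4] := avoid pp jp qp nq.
    by rewrite andbT /in_block /= !relabel_eq.
  case: pp => _ -> //; rewrite /i'; case: ifP => ?; rewrite doubleS in b3 *; apply/andP; lia.
- move=> [a [b [c [d [ab bc cd ac bd]]]]]; apply: nc.
  move: ac bd => /mem [[a0 c0] q1 [_ [ea ec] [a1 a2 a3 a4]]].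
  move=> /mem [[b0 d0] q2 [_ [eb ed] [a5 a6 a7 a8]]].
  rewrite /= in a1 a2 a3 a4 a5 a6 a7 a8 ea eb ec ed.
  move: ab bc cd; rewrite ea eb ec ed => ab bc cd.
  exists a0, b0, c0, d0; split => //.
  - by rewrite -(relabel_lt a1 a2 a5 a6).
  - by rewrite -(relabel_lt a5 a6 a3 a4).
  - by rewrite -(relabel_lt a3 a4 a7 a8).
Qed.

Lemma reduce (T : Type) n pi (g : nat -> T) j :
  noncrossing_pair_partition n.*2 pi -> adopted n pi g -> (j, j.+1) \in pi ->
  1 <= j -> j + 2 <= n.*2 ->
  exists n1, [/\ n = n1.+1, g j = g (j + 2),
    noncrossing_pair_partition n1.*2 (delete_block pi j) &
    adopted n1 (delete_block pi j) (delete_two g j)].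
Proof.
case: n => [|[|n2]] //= ncp ad jp h1 h2; first lia.
have [[e1 _] e2] := ad j jp h1 ltac:(lia).
exists n2.+1; split => //.
exact: (delete_ncpp (n := n2.+1)).
Qed.

Lemma mem_del pi j a b : (a, b) \in pi -> a != j ->
  (relabel j a, relabel j b) \in delete_block pi j.
Proof.
move=> ab na; apply/mapP; exists (a, b) => //.
by rewrite mem_filter ab andbT; apply: contra na => /eqP [->].
Qed.

Lemma innerAC (T : Type) n : forall pi (g : nat -> T) m l,
  noncrossing_pair_partition n.*2 pi -> adopted n pi g -> (m, m + l) \in pi -> 1 < l ->
  g (m + 1) = g (m + l) /\ (m + l < n.*2 -> g m = g (m + l + 1)).
Proof.
elim: n => [|n IH] pi g m l ncp ad ml hl; first by [].
have [b1 [b2 b3]] := pp_bounds ncp.1 ml; rewrite /= in b1 b2 b3.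
have [j [jp j1 j2]] := inner_pair ncp (leqnn _) ml ltac:(lia).
have [n1 [en gj ncp' ad']] := reduce ncp ad jp ltac:(lia) ltac:(lia).
case: en => en; subst n1.
have ml' := mem_del (j:=j) ml ltac:(apply/eqP; lia).
have e1 : relabel j (m + l) = m + (l - 2) by rewrite /relabel; case: ifP => ?; lia.
have em : relabel j m = m by rewrite /relabel; case: ifP => ?; lia.
rewrite e1 em in ml'.
case: (ltnP 3 l) => hl3.
- have [IH1 IH2] := IH _ _ _ _ ncp' ad' ml' ltac:(lia).
  move: IH1 IH2; rewrite /delete_two.
  have -> : m + 1 <= j by lia.
  have -> : (m + (l - 2) + 1 <= j) = false by lia.
  have -> : m <= j by lia.
  move=> IH1 IH2; split.
  + rewrite IH1; case: ifP => ?.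
    * have -> : m + (l - 2) = j by lia.
      by rewrite gj; congr g; lia.
    * by congr g; lia.
  + move=> hlt; rewrite IH2; [by congr g; lia | rewrite doubleS in hlt; lia].
- have ej : j = m + 1 by lia.
  have el : l = 3 by lia.
  subst j l; split; first by rewrite gj; congr g; lia.
  move=> hlt; rewrite doubleS in hlt.
  have e3 : m + (3 - 2) = m.+1 by lia.
  rewrite e3 in ml'.
  move: ncp' ad'; rewrite addn1 => ncp' ad'.
  have [n2 [_ gj2 _ _]] := reduce ncp' ad' ml' ltac:(lia) ltac:(lia).
  move: gj2; rewrite /delete_two.
  have -> : m <= m.+1 by lia.
  have -> : (m + 2 <= m.+1) = false by lia.
  by move=> ->; congr g; lia.
Qed.

Lemma lastB (T : Type) n : forall pi (g : nat -> T) m,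
  noncrossing_pair_partition n.*2 pi -> adopted n pi g -> (m, n.*2) \in pi -> g m = g 1.
Proof.
elim: n => [|n IH] pi g m ncp ad mk; first by [].
have [b1 [b2 b3]] := pp_bounds ncp.1 mk; rewrite /= in b1 b2 b3.
case: (ltngtP m 1) => hm; [lia | | by rewrite hm].
have [j [jp j1 j2]] := prefix_pair ncp mk hm.
have [n1 [en gj ncp' ad']] := reduce ncp ad jp ltac:(lia) ltac:(lia).
case: en => en; subst n1.
have ml' := mem_del (j:=j) mk ltac:(apply/eqP; lia).
have e1 : relabel j n.+1.*2 = n.*2 by rewrite /relabel doubleS; case: ifP => ?; lia.
have em : relabel j m = m - 2 by rewrite /relabel; case: ifP => ?; lia.
rewrite e1 em in ml'.
have := IH _ _ _ ncp' ad' ml'; rewrite /delete_two.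
have -> : 1 <= j by lia.
case: ifP => ? <-.
- have -> : m - 2 = j by lia.
  by rewrite gj; congr g; lia.
- by congr g; lia.
Qed.

Theorem mainTheorem2 (G : countType) (k : nat) (pi : seq (nat * nat)) (g : nat -> G) :
  ~~ odd k ->
  noncrossing_pair_partition k pi ->
  adopted k./2 pi g ->
  forall m l : nat, (m, m + l) \in pi -> m + l <= k -> 1 < l ->
    gcyc k g m = gcyc k g (m + l + 1) /\ gcyc k g (m + 1) = gcyc k g (m + l).
Proof.
move=> ev ncp ad m l ml hk hl.
have ek : k = k./2.*2 by have := odd_double_half k; rewrite (negbTE ev) add0n.
move: ncp ad ml hk; set n := k./2 => ncp ad ml hk.
rewrite ek in ncp.
have [A C] := innerAC ncp ad ml hl.
rewrite /gcyc.
have -> : (m == k.+1) = false by apply/eqP; lia.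
have -> : (m + 1 == k.+1) = false by apply/eqP; lia.
have -> : (m + l == k.+1) = false by apply/eqP; lia.
split => //.
case: ifP => /eqP h.
- have e : m + l = n.*2 by lia.
  rewrite e in ml; exact: lastB ncp ad ml.
- apply: C; lia.
Qed.
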